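(* Let $u$ and $v$ be two vertices of a graph $G$ such that $u\cong_m v$ and the distance between $u$ and $v$ in $G$ is more than $2m$. Then $u\cong^D_m v$, i.e. Duplicator wins the $m$-round differential game between $u$ and $v$.
   Context: Graphs are finite, simple, undirected, loopless, possibly labelled with unary predicates. $N(u)$ is the neighbourhood of $u$ and $D(u,v):=N(u)\,\Delta\,N(v)$. $u\cong_m v$ means Duplicator wins the standard $m$-round Ehrenfeucht–Fraïssé game on $(G,u)$ and $(G,v)$ (equivalently, $u,v$ satisfy the same FO formulas of quantifier rank $m$). Differential game from $(\bar a,\bar b)$ on a single graph $G$: in each round, with current tuples $(a_1,\dots,a_n),(b_1,\dots,b_n)$, Spoiler chooses $i\le n$ and $v\in D(a_i,b_i)$ and declares whether $v$ becomes $a_{n+1}$ or $b_{n+1}$ (if all $D(a_i,b_i)$ are empty, Duplicator wins); Duplicator answers with a vertex $w\in D(a_i,b_i)$ (same $i$), which becomes the other of $b_{n+1},a_{n+1}$. After the rounds, Duplicator wins iff $a_i\mapsto b_i$ is a label-preserving isomorphism between the induced subgraphs on the $a$'s and $b$'s. $u\cong^D_m v$ means Duplicator has a winning strategy in the $m$-round differential game from $((u),(v))$. *)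

(* Defs.v *)
From mathcomp Require Import all_boot.
Set Implicit Arguments. Unset Strict Implicit. Unset Printing Implicit Defensive.

Section Games.
Variables (T : finType) (e : rel T) (I : Type) (lab : I -> pred T).

Definition nbhd (u : T) : {set T} := [set w | e u w].

Definition symdiff_nbhd (u v : T) : {set T} :=
  (nbhd u :\: nbhd v) :|: (nbhd v :\: nbhd u).

(* The map a_i |-> b_i is a
   label-preserving isomorphism between the induced subgraphs on the a's and
   the b's (well-defined and injective, preserving adjacency and labels). *)
Definition piso (p : seq (T * T)) : Prop :=
  forall x y, x \in p -> y \in p ->
    (x.1 == y.1) = (x.2 == y.2) /\ e x.1 y.1 = e x.2 y.2 /\
    (forall l, lab l x.1 = lab l x.2).

Fixpoint EFwin (k : nat) (p : seq (T * T)) : Prop :=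
  match k with
  | 0 => piso p
  | k'.+1 =>
      (forall x, exists y, EFwin k' (rcons p (x, y))) /\
      (forall y, exists x, EFwin k' (rcons p (x, y)))
  end.

Definition EFequiv (m : nat) (u v : T) : Prop := EFwin m [:: (u, v)].

(* Differential game: Spoiler picks a pair q = (a_i,b_i) of the position and
   x in D(a_i,b_i), declaring it a_{n+1} or b_{n+1}; Duplicator answers with
   w in D(a_i,b_i) (same i).  If all D(a_i,b_i) are empty, Duplicator wins. *)
Fixpoint DiffWin (k : nat) (p : seq (T * T)) : Prop :=
  match k with
  | 0 => piso p
  | k'.+1 =>
      (forall q, q \in p -> symdiff_nbhd q.1 q.2 = set0) \/
      (forall q, q \in p -> forall x, x \in symdiff_nbhd q.1 q.2 ->
         (exists2 w, w \in symdiff_nbhd q.1 q.2 & DiffWin k' (rcons p (x, w))) /\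
         (exists2 w, w \in symdiff_nbhd q.1 q.2 & DiffWin k' (rcons p (w, x))))
  end.

Definition Dequiv (m : nat) (u v : T) : Prop := DiffWin m [:: (u, v)].

(* within k x y : there is a walk of length at most k from x to y,
   i.e. dist(x,y) <= k (dist = infinity if no path). *)
Fixpoint within (k : nat) (x y : T) : bool :=
  match k with
  | 0 => x == y
  | k'.+1 => within k' x y || [exists z, e x z && within k' z y]
  end.

End Games.

(* Main.v *)
Require Import Defs.
From mathcomp Require Import all_boot.
From mathcomp Require Import zify.
Set Implicit Arguments. Unset Strict Implicit.

Lemma within_S (T : finType) (e : rel T) a x y : within e a x y -> within e a.+1 x y.
Proof. by move=> h /=; rewrite h. Qed.

Lemma within_mono (T : finType) (e : rel T) a b x y :
  a <= b -> within e a x y -> within e b x y.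
Proof.
move=> ab h; elim: b ab => [|b IH]; first by rewrite leqn0 => /eqP <-.
rewrite leq_eqVlt => /orP [/eqP <- //|]; rewrite ltnS => /IH; exact: within_S.
Qed.

Lemma within_cat (T : finType) (e : rel T) a b x y z :
  within e a x y -> within e b y z -> within e (a + b) x z.
Proof.
elim: a x => [|a IH] x /=; first by move=> /eqP ->.
case/orP => [h1 h2|/existsP [w /andP [exw hw]] h2].
  by apply: within_S; apply: IH h1 h2.
by apply/orP; right; apply/existsP; exists w; rewrite exw (IH _ hw h2).
Qed.

Lemma within_edge (T : finType) (e : rel T) x y : e x y -> within e 1 x y.
Proof. by move=> h /=; apply/orP; right; apply/existsP; exists y; rewrite h eqxx. Qed.

Lemma within_sym (T : finType) (e : rel T) (e_sym : symmetric e) a x y :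
  within e a x y -> within e a y x.
Proof.
elim: a x y => [|a IH] x y /=; first by rewrite eq_sym.
case/orP => [h|/existsP [w /andP [exw hw]]]; first by rewrite IH.
have := within_cat (IH _ _ hw) (@within_edge T e w x _).
rewrite e_sym exw addn1 => /(_ isT) //.
Qed.

Lemma far (T : finType) (e : rel T) (e_sym : symmetric e) u v N a b p q :
  a + b + 1 <= N -> ~~ within e N u v -> within e a u p -> within e b v q ->
  (p == q) = false /\ e p q = false.
Proof.
move=> hN nW hp hq; have hq' := within_sym e_sym hq.
split; apply/negbTE/negP.
  move=> /eqP epq; subst q; apply: (negP nW).
  have hle : a + b <= N by lia.
  exact: within_mono hle (within_cat hp hq').
move=> epq; apply: (negP nW).
have hle : a + 1 + b <= N by lia.
exact: within_mono hle (within_cat (within_cat hp (within_edge epq)) hq').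
Qed.

Definition crossQ (T : finType) (e : rel T) (Q : seq (T * T)) :=
  forall s t, s \in Q -> t \in Q ->
    (s.1 == t.2) = (s.2 == t.1) /\ e s.1 t.2 = e s.2 t.1.
Definition matchPQ (T : finType) (P Q : seq (T * T)) :=
  forall z, z \in P -> exists2 s, s \in Q & (z = s \/ z = (s.2, s.1)).
Definition distQ (T : finType) (e : rel T) u v d (Q : seq (T * T)) :=
  forall s, s \in Q -> within e d u s.1 /\ within e d v s.2.

Lemma EF_piso (T : finType) (e : rel T) (I : Type) (lab : I -> pred T) k Q (x0 : T) :
  EFwin e lab k Q -> piso e lab Q.
Proof.
elim: k Q => [|k IH] Q //= [H _]; case: (H x0) => y /IH hp x z xQ zQ.
by apply: hp; rewrite mem_rcons in_cons ?xQ ?zQ orbT.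
Qed.

Lemma piso_of (T : finType) (e : rel T) (I : Type) (lab : I -> pred T)
  (e_sym : symmetric e) P Q :
  piso e lab Q -> crossQ e Q -> matchPQ P Q -> piso e lab P.
Proof.
move=> hp hc hm x y xP yP.
case: (hm x xP) => s sQ [->|->]; case: (hm y yP) => t tQ [->|->] /=.
- exact: hp.
- have [h1 h2] := hc _ _ sQ tQ; split => //; split => //.
  by move=> l; have [_ [_ ->]] := hp _ _ sQ tQ.
- have [h1 h2] := hc _ _ tQ sQ; split; first by rewrite eq_sym h1 eq_sym.
  split; first by rewrite e_sym h2 e_sym.
  by move=> l; have [_ [_ ->]] := hp _ _ sQ tQ.
- have [h1 [h2 h3]] := hp _ _ sQ tQ; by split => //; split => // l; rewrite h3.
Qed.

Lemma match_rcons (T : finType) (P Q : seq (T * T)) z n :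
  matchPQ P Q -> (z = n \/ z = (n.2, n.1)) -> matchPQ (rcons P z) (rcons Q n).
Proof.
move=> hm hz w; rewrite mem_rcons in_cons => /orP [/eqP ->|wP].
  by exists n; rewrite ?mem_rcons ?in_cons ?eqxx.
case: (hm w wP) => s sQ hs; exists s => //.
by rewrite mem_rcons in_cons sQ orbT.
Qed.

Lemma dist_rcons (T : finType) (e : rel T) u v d Q n :
  distQ e u v d Q -> within e d.+1 u n.1 -> within e d.+1 v n.2 ->
  distQ e u v d.+1 (rcons Q n).
Proof.
move=> hd h1 h2 s; rewrite mem_rcons in_cons => /orP [/eqP ->|sQ] //.
by have [? ?] := hd s sQ; split; apply: within_S.
Qed.

Lemma cross_rcons (T : finType) (e : rel T) (e_sym : symmetric e) u v d Q n :
  crossQ e Q -> distQ e u v d Q -> within e d.+1 u n.1 -> within e d.+1 v n.2 ->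
  ~~ within e (d.+1 + d.+1) u v -> crossQ e (rcons Q n).
Proof.
move=> hc hd h1 h2 nW s t.
have hle1 : d.+1 + d + 1 <= d.+1 + d.+1 by lia.
have hle2 : d + d.+1 + 1 <= d.+1 + d.+1 by lia.
rewrite !mem_rcons !in_cons => /orP [/eqP ->|sQ] /orP [/eqP ->|tQ].
- by rewrite eq_sym e_sym.
- have [t1 t2] := hd t tQ.
  have [a1 a2] := far e_sym hle1 nW h1 t2.
  have [b1 b2] := far e_sym hle2 nW t1 h2.
  by rewrite a1 a2 eq_sym b1 e_sym b2.
- have [t1 t2] := hd s sQ.
  have [a1 a2] := far e_sym hle1 nW h1 t2.
  have [b1 b2] := far e_sym hle2 nW t1 h2.
  by rewrite b1 b2 eq_sym a1 e_sym a2.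
- exact: hc.
Qed.

Lemma inD (T : finType) (e : rel T) a b w :
  (w \in symdiff_nbhd e a b) = (e a w != e b w).
Proof.
by rewrite /symdiff_nbhd /nbhd !inE; case: (e a w); case: (e b w).
Qed.

Lemma arith1 d : d.+1 + d + 1 <= d.+1 + d.+1. Proof. lia. Qed.
Lemma arith2 d : d + d.+1 + 1 <= d.+1 + d.+1. Proof. lia. Qed.

Lemma mainL (T : finType) (e : rel T) (I : Type) (lab : I -> pred T)
  (e_sym : symmetric e) u v k :
  forall d P Q, ~~ within e (2 * (d + k)) u v -> EFwin e lab k Q ->
  matchPQ P Q -> crossQ e Q -> distQ e u v d Q -> DiffWin e lab k P.
Proof.
elim: k => [|k IH] d P Q nW hEF hm hc hd.
  exact: (piso_of e_sym hEF hc hm).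
have nW2 : ~~ within e (d.+1 + d.+1) u v.
  apply/negP => h; apply: (negP nW).
  have hle : d.+1 + d.+1 <= 2 * (d + k.+1) by lia.
  exact: within_mono hle h.
have nW3 : ~~ within e (2 * (d.+1 + k)) u v.
  by have -> : 2 * (d.+1 + k) = 2 * (d + k.+1) by lia.
have hpQ := EF_piso u hEF.
case: hEF => Hf Hb.
right => z zP x xD.
case: (hm z zP) => s sQ hz.
have Dz : forall w, (w \in symdiff_nbhd e z.1 z.2) = (e s.1 w != e s.2 w).
  by move=> w; rewrite inD; case: hz => -> //=; rewrite eq_sym.
rewrite Dz in xD.
have [s1 s2] := hd s sQ.
case: (boolP (e s.1 x)) => h1.
- have h2 : e s.2 x = false by move: xD; rewrite h1; case: (e s.2 x).
  case: (Hf x) => y Hy.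
  have hp := EF_piso u Hy.
  have sQ' : s \in rcons Q (x, y) by rewrite mem_rcons in_cons sQ orbT.
  have nQ' : (x, y) \in rcons Q (x, y) by rewrite mem_rcons in_cons eqxx.
  have [_ [ey _]] := hp s (x, y) sQ' nQ'.
  rewrite /= h1 in ey.
  have wx : within e d.+1 u x.
    by have := within_cat s1 (within_edge h1); rewrite addn1.
  have wy : within e d.+1 v y.
    by have := within_cat s2 (within_edge (esym ey)); rewrite addn1.
  have hle := arith2 d.
  have [_ ny] := far e_sym hle nW2 s1 wy.
  have yD : y \in symdiff_nbhd e z.1 z.2 by rewrite Dz ny -ey.
  have hc' := cross_rcons e_sym (n := (x, y)) hc hd wx wy nW2.
  have hd' := dist_rcons (n := (x, y)) hd wx wy.
  split; exists y => //; apply: (IH d.+1 _ (rcons Q (x, y))) => //;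
    apply: match_rcons => //; by [left | right].
- have h2 : e s.2 x by move: xD; rewrite (negbTE h1); case: (e s.2 x).
  case: (Hb x) => y Hy.
  have hp := EF_piso u Hy.
  have sQ' : s \in rcons Q (y, x) by rewrite mem_rcons in_cons sQ orbT.
  have nQ' : (y, x) \in rcons Q (y, x) by rewrite mem_rcons in_cons eqxx.
  have [_ [ey _]] := hp s (y, x) sQ' nQ'.
  rewrite /= h2 in ey.
  have wy : within e d.+1 u y.
    by have := within_cat s1 (within_edge ey); rewrite addn1.
  have wx : within e d.+1 v x.
    by have := within_cat s2 (within_edge h2); rewrite addn1.
  have hle := arith1 d.
  have [_ ny] := far e_sym hle nW2 wy s2.
  have yD : y \in symdiff_nbhd e z.1 z.2 by rewrite Dz ey e_sym ny.
  have hc' := cross_rcons e_sym (n := (y, x)) hc hd wy wx nW2.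
  have hd' := dist_rcons (n := (y, x)) hd wy wx.
  split; exists y => //; apply: (IH d.+1 _ (rcons Q (y, x))) => //;
    apply: match_rcons => //; by [left | right].
Qed.

Unset Implicit Arguments.
Theorem lemma6p2 (T : finType) (e : rel T) (I : Type) (lab : I -> pred T)
  (e_sym : symmetric e) (e_irr : irreflexive e) (m : nat) (u v : T) :
  EFequiv e lab m u v ->
  ~~ within e (2 * m) u v ->
  Dequiv e lab m u v.
Proof.
move=> hEF nW.
have hm : matchPQ [:: (u, v)] [:: (u, v)].
  by move=> z; rewrite inE => /eqP ->; exists (u, v); rewrite ?inE //; left.
have hc : crossQ e [:: (u, v)].
  by move=> s t; rewrite !inE => /eqP -> /eqP -> /=; rewrite eq_sym e_sym.
have hd : distQ e u v 0 [:: (u, v)].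
  by move=> s; rewrite inE => /eqP -> /=; rewrite !eqxx.
exact: (mainL e_sym (d := 0) nW hEF hm hc hd).
Qed.
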